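(* Let $\mathcal{K}$ be a convex cone in a finite-dimensional Euclidean space ${\mathbb E}$ and let ${\mathcal F}_t \unlhd \mathcal{K}$ be a face. Consider any sequence constructed as follows: ${\mathcal F}_0=\mathcal{K}$, and as long as there exists a vector $d_i$ with $d_i\in {\mathcal F}_i^*$, $d_i\notin {\mathcal F}_i^{\perp}$ and $d_i\perp {\mathcal F}_t$, choose such a $d_i$ and set ${\mathcal F}_{i+1}={\mathcal F}_i\cap d_i^{\perp}$; stop at the first index $d$ for which no such vector exists. Then this process stops after finitely many steps, and at termination ${\mathcal F}_d={\mathcal F}_t$.
   Context: For a set $S$, $S^*=\{y: \langle y,x\rangle\ge 0\ \forall x\in S\}$ is its dual cone and $S^\perp$ its orthogonal complement; $d\perp S$ means $\langle d,x\rangle=0$ for all $x\in S$. A face $f\unlhd \mathcal{K}$ is a convex subset $f\subseteq\mathcal{K}$ such that $x,y\in\mathcal{K}$, $\tfrac12(x+y)\in f$ imply $x,y\in f$. *)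

(* Defs.v *)
From mathcomp Require Import all_boot all_order all_algebra.
From mathcomp Require Import all_classical all_reals.
Set Implicit Arguments. Unset Strict Implicit. Unset Printing Implicit Defensive.
Import Order.TTheory GRing.Theory Num.Theory.
Local Open Scope ring_scope.

Section Defs.
Variables (R : realType) (n : nat).
Notation E := 'rV[R]_n.

Definition dotv (u v : E) : R := \sum_(i < n) u 0 i * v 0 i.

Definition cvx_set (S : E -> Prop) : Prop :=
  forall x y (t : R), S x -> S y -> 0 <= t -> t <= 1 -> S (t *: x + (1 - t) *: y).

Definition convex_cone (K : E -> Prop) : Prop :=
  forall x y (a b : R), K x -> K y -> 0 <= a -> 0 <= b -> K (a *: x + b *: y).

Definition dual_cone (S : E -> Prop) : E -> Prop :=
  fun y => forall x, S x -> 0 <= dotv y x.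

Definition orth (S : E -> Prop) : E -> Prop :=
  fun y => forall x, S x -> dotv y x = 0.

Definition hyp_perp (d : E) : E -> Prop := fun x => dotv d x = 0.

Definition is_face (K f : E -> Prop) : Prop :=
  (forall x, f x -> K x) /\ cvx_set f /\
  (forall x y, K x -> K y -> f ((2 : R)^-1 *: (x + y)) -> f x /\ f y).

Definition admissible (Ft F : E -> Prop) (d : E) : Prop :=
  dual_cone F d /\ ~ orth F d /\ orth Ft d.

Definition facial_step (Ft F G : E -> Prop) : Prop :=
  exists d, admissible Ft F d /\ G = (fun x => F x /\ hyp_perp d x).

End Defs.

(* Main.v *)
Require Import Defs.
From mathcomp Require Import all_boot all_order all_algebra.
From mathcomp Require Import all_classical all_reals.
From mathcomp Require Import lra ring.
Set Implicit Arguments. Unset Strict Implicit. Unset Printing Implicit Defensive.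
Import Order.TTheory GRing.Theory Num.Theory.
Local Open Scope ring_scope.

Lemma dotvDr (R : realType) (n : nat) (u x y : 'rV[R]_n) :
  dotv u (x + y) = dotv u x + dotv u y.
Proof. by rewrite /dotv -big_split; apply: eq_bigr => i _; rewrite mxE mulrDr. Qed.

Lemma dotvZr (R : realType) (n : nat) (u x : 'rV[R]_n) a :
  dotv u (a *: x) = a * dotv u x.
Proof. by rewrite /dotv mulr_sumr; apply: eq_bigr => i _; rewrite mxE mulrCA. Qed.

Lemma dotvDl (R : realType) (n : nat) (u v x : 'rV[R]_n) :
  dotv (u + v) x = dotv u x + dotv v x.
Proof. by rewrite /dotv -big_split; apply: eq_bigr => i _; rewrite mxE mulrDl. Qed.

Lemma dotvZl (R : realType) (n : nat) (u x : 'rV[R]_n) a :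
  dotv (a *: u) x = a * dotv u x.
Proof. by rewrite /dotv mulr_sumr; apply: eq_bigr => i _; rewrite mxE mulrA. Qed.

Lemma dotvNr (R : realType) (n : nat) (u x : 'rV[R]_n) :
  dotv u (- x) = - dotv u x.
Proof. by rewrite -scaleN1r dotvZr mulN1r. Qed.

Lemma dotvBr (R : realType) (n : nat) (u x y : 'rV[R]_n) :
  dotv u (x - y) = dotv u x - dotv u y.
Proof. by rewrite dotvDr dotvNr. Qed.

Lemma dotv0r (R : realType) (n : nat) (u : 'rV[R]_n) : dotv u 0 = 0.
Proof. by rewrite -(scale0r 0) dotvZr mul0r. Qed.

Lemma dotv_delta (R : realType) (n : nat) (j : 'I_n) (x : 'rV[R]_n) :
  dotv (delta_mx 0 j) x = x 0 j.
Proof.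
rewrite /dotv (bigD1 j) //= big1 ?addr0.
  by rewrite mxE !eqxx mul1r.
by move=> i /negbTE ij; rewrite mxE ij andbF mul0r.
Qed.

Lemma span_closed (R : realType) (n : nat) (P : 'rV[R]_n -> Prop) :
  P 0 -> (forall x y, P x -> P y -> P (x + y)) -> (forall a x, P x -> P (a *: x)) ->
  forall X : seq 'rV[R]_n, (forall x, x \in X -> P x) ->
  forall v, v \in <<X>>%VS -> P v.
Proof.
move=> P0 PD PZ; elim=> [|x X IH] HX v.
  by rewrite span_nil memv0 => /eqP ->.
rewrite span_cons => /memv_addP [u /vlineP [k ->] [w Hw ->]].
apply: PD; first by apply: PZ; apply: HX; rewrite inE eqxx.
by apply: IH => // y Hy; apply: HX; rewrite inE Hy orbT.
Qed.

Lemma free_size (R : realType) (n : nat) (X : seq 'rV[R]_n) :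
  free X -> (size X <= n)%N.
Proof.
move=> /eqP <-; have := dimvS (subvf <<X>>%VS).
by rewrite dimvf /dim /= mul1n.
Qed.

Fixpoint pref (T : Type) (d : nat -> T) (k : nat) : seq T :=
  if k is k'.+1 then d k' :: pref d k' else [::].

Lemma pref_size T (d : nat -> T) k : size (pref d k) = k.
Proof. by elim: k => //= k ->. Qed.

Lemma pref_mem (T : eqType) (d : nat -> T) k x :
  x \in pref d k -> exists2 i, (i < k)%N & x = d i.
Proof.
elim: k => //= k IH; rewrite inE => /orP [/eqP ->|/IH [i Hi ->]].
  by exists k.
by exists i => //; apply: ltnW.
Qed.

Lemma orth_closed (R : realType) (n : nat) (S : 'rV[R]_n -> Prop) :
  orth S 0 /\ (forall x y, orth S x -> orth S y -> orth S (x + y)) /\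
  (forall a x, orth S x -> orth S (a *: x)).
Proof.
split; [|split].
- by move=> z _; rewrite /dotv big1 // => i _; rewrite mxE mul0r.
- by move=> x y Hx Hy z Hz; rewrite dotvDl Hx // Hy // addr0.
- by move=> a x Hx z Hz; rewrite dotvZl Hx // mulr0.
Qed.

Lemma part1 (R : realType) (n : nat) (Ft : 'rV[R]_n -> Prop)
  (F : nat -> ('rV[R]_n -> Prop)) :
  exists i : nat, ~ facial_step Ft (F i) (F i.+1).
Proof.
apply: contrapT => Hn; exfalso.
have H' : forall i, facial_step Ft (F i) (F i.+1).
  by move=> i; apply: contrapT => Hi; apply: Hn; exists i.
pose d i := projT1 (cid (H' i)).
have Hd i : admissible Ft (F i) (d i) /\ F i.+1 = (fun x => F i x /\ hyp_perp (d i) x).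
  exact: projT2 (cid (H' i)).
have dec : forall i j x, (i <= j)%N -> F j x -> F i x.
  move=> i j x /subnK <-; elim: (j - i)%N => [//|k IH].
  rewrite addSn (Hd (k + i)%N).2 => -[Hx _]; exact: IH.
have inorth : forall i j, (i < j)%N -> orth (F j) (d i).
  move=> i j ij x Fx; have := dec _ _ x ij Fx.
  by rewrite (Hd i).2 => -[].
have fr : forall k, free (pref d k).
  elim=> [|k IH]; first by rewrite /free span_nil dimv0.
  rewrite /= free_cons IH andbT; apply/negP => Hin.
  have [_ [Hno _]] := (Hd k).1; apply: Hno.
  have [O0 [OD OZ]] := orth_closed (F k).
  apply: (span_closed O0 OD OZ (X := pref d k)) Hin => x /pref_mem [i ik ->].
  exact: inorth.
by have := free_size (fr n.+1); rewrite pref_size ltnn.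
Qed.

Lemma cc_scale (R : realType) (n : nat) (C : 'rV[R]_n -> Prop) (cC : convex_cone C) a x :
  C x -> 0 <= a -> C (a *: x).
Proof. by move=> Cx a0; have := cC x x a 0 Cx Cx a0 (lexx _); rewrite scale0r addr0. Qed.

Lemma cc_add (R : realType) (n : nat) (C : 'rV[R]_n -> Prop) (cC : convex_cone C) x y :
  C x -> C y -> C (x + y).
Proof. by move=> Cx Cy; have := cC x y 1 1 Cx Cy ler01 ler01; rewrite !scale1r. Qed.

Lemma neg_help (R : realType) (n : nat) (v z : 'rV[R]_n) (s t : R) :
  0 < s -> - v = s^-1 *: (- (s *: v + t *: z)) + (t / s) *: z.
Proof.
move=> s0; rewrite scalerN scalerDr !scalerA mulVf ?gt_eqF // scale1r.
by rewrite opprD -addrA mulrC addNr addr0.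
Qed.

Lemma Qlem (R : realType) (n : nat) (k : nat) : (k <= n)%N ->
  forall C : 'rV[R]_n -> Prop, convex_cone C ->
  (forall x, C x -> forall j : 'I_n, (k <= j)%N -> x 0 j = 0) ->
  (exists v, C v /\ ~ C (- v)) ->
  exists d, dual_cone C d /\ exists x, C x /\ 0 < dotv d x.
Proof.
elim: k => [_|k IH kn] C cC HV [v [Cv NCv]].
  exfalso; apply: NCv; suff v0 : v = 0 by rewrite v0 oppr0 -v0.
  by apply/rowP => j; rewrite mxE; apply: HV.
pose j := Ordinal kn.
pose D := fun x : 'rV[R]_n => C x /\ x 0 j = 0.
have cD : convex_cone D.
  move=> x y a b [Cx x0] [Cy y0] a0 b0; split; first exact: cC.
  by rewrite !mxE x0 y0 !mulr0 addr0.
have HVD : forall x, D x -> forall j' : 'I_n, (k <= j')%N -> x 0 j' = 0.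
  move=> x [Cx x0] j'; rewrite leq_eqVlt => /orP [/eqP kj|kj].
    by have -> : j' = j by apply: val_inj; rewrite /= kj.
  exact: HV.
have k1 : (k <= n)%N by apply: ltnW.
case: (pselect (exists p, C p /\ 0 < p 0 j)) => [[p [Cp p0]]|NP];
  case: (pselect (exists q, C q /\ q 0 j < 0)) => [[q [Cq q0]]|NQ].
-
  case: (pselect (exists v, D v /\ ~ D (- v))) => [HD|HD].
  + have [d' [dD [x [Dx dx]]]] := IH k1 D cD HVD HD.
    pose L : set R := fun r : R => exists y, C y /\ y 0 j = 1 /\ r = - dotv d' y.
    have key : forall y z, C y -> C z -> y 0 j = 1 -> z 0 j = -1 ->
        - dotv d' y <= dotv d' z.
      move=> y z Cy Cz y1 z1; have Dyz : D (y + z).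
        by split; [apply: (cc_add cC) | rewrite mxE y1 z1 subrr].
      by have := dD _ Dyz; rewrite dotvDr => h; rewrite -subr_ge0 opprK addrC.
    pose p' := (p 0 j)^-1 *: p.
    have Cp' : C p' by apply: (cc_scale cC) => //; rewrite invr_ge0 ltW.
    have p'1 : p' 0 j = 1 by rewrite mxE mulVf ?gt_eqF.
    pose q' := (- q 0 j)^-1 *: q.
    have Cq' : C q' by apply: (cc_scale cC) => //; rewrite invr_ge0 oppr_ge0 ltW.
    have q'1 : q' 0 j = -1 by rewrite mxE invrN mulNr mulVf ?lt_eqF.
    have Lne : exists r, L r by exists (- dotv d' p'), p'.
    have Lub : forall z, C z -> z 0 j = -1 -> ubound L (dotv d' z).
      by move=> z Cz z1 r [y [Cy [y1 ->]]]; apply: key.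
    have Lhas : has_ubound L by exists (dotv d' q'); apply: Lub.
    pose mu := sup L.
    exists (d' + mu *: delta_mx 0 j); split; last first.
      exists x; split; first by case: Dx.
      by rewrite dotvDl dotvZl dotv_delta Dx.2 mulr0 addr0.
    move=> y Cy; rewrite dotvDl dotvZl dotv_delta.
    case: (ltgtP (y 0 j) 0) => [yn|yp|y0].
    * pose y' := (- y 0 j)^-1 *: y.
      have Cy' : C y' by apply: (cc_scale cC) => //; rewrite invr_ge0 oppr_ge0 ltW.
      have y'1 : y' 0 j = -1 by rewrite mxE invrN mulNr mulVf ?lt_eqF.
      have mule : mu <= dotv d' y' by apply: ge_sup => //; apply: Lub.
      have -> : y = (- y 0 j) *: y' by rewrite /y' scalerA mulfV ?scale1r // oppr_eq0 lt_eqF.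
      rewrite dotvZr mxE y'1; nra.
    * pose y' := (y 0 j)^-1 *: y.
      have Cy' : C y' by apply: (cc_scale cC) => //; rewrite invr_ge0 ltW.
      have y'1 : y' 0 j = 1 by rewrite mxE mulVf ?gt_eqF.
      have lemu : - dotv d' y' <= mu by apply: ub_le_sup => //; exists y'.
      have -> : y = (y 0 j) *: y' by rewrite /y' scalerA mulfV ?scale1r // gt_eqF.
      rewrite dotvZr mxE y'1; nra.
    * by rewrite y0 mulr0 addr0; apply: dD.
  + exfalso; apply: NCv.
    have Dsym : forall w, D w -> C (- w).
      by move=> w Dw; apply: contrapT => Nw; apply: HD; exists w; split => // -[].
    have gen : forall z s t, C z -> 0 < s -> 0 < t -> s * v 0 j + t * z 0 j = 0 -> C (- v).
      move=> z s t Cz s0 t0 e; rewrite (@neg_help _ _ v z s t s0).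
      have Cw : C (- (s *: v + t *: z)).
        apply: Dsym; split; last by rewrite !mxE.
        by apply: (cc_add cC); apply: (cc_scale cC) => //; apply: ltW.
      by apply: cC => //; [rewrite invr_ge0 ltW | apply: divr_ge0; apply: ltW].
    case: (ltgtP (v 0 j) 0) => [vn|vp|v0].
    * apply: (gen p (p 0 j) (- v 0 j)) => //; first by rewrite oppr_gt0.
      by ring.
    * apply: (gen q (- q 0 j) (v 0 j)) => //; first by rewrite oppr_gt0.
      by ring.
    * by apply: Dsym.
-
  exists (delta_mx 0 j); split; last by exists p; rewrite dotv_delta.
  move=> y Cy; rewrite dotv_delta leNgt; apply/negP => yn; apply: NQ; by exists y.
-
  exists ((-1) *: delta_mx 0 j); split; last by exists q; rewrite dotvZl dotv_delta mulN1r oppr_gt0.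
  move=> y Cy; rewrite dotvZl dotv_delta mulN1r oppr_ge0 leNgt; apply/negP => yp; apply: NP; by exists y.
-
  have all0 : forall y, C y -> y 0 j = 0.
    move=> y Cy; case: (ltgtP (y 0 j) 0) => // [yn|yp].
      by exfalso; apply: NQ; exists y.
    by exfalso; apply: NP; exists y.
  have HD : exists v, D v /\ ~ D (- v).
    by exists v; split; [split => //; apply: all0 | case].
  have [d [dD [x [Dx dx]]]] := IH k1 D cD HVD HD.
  exists d; split; last by exists x; split => //; case: Dx.
  by move=> y Cy; apply: dD; split => //; apply: all0.
Qed.

Lemma face_facts (R : realType) (n : nat) (K G : 'rV[R]_n -> Prop) :
  convex_cone K -> is_face K G -> (exists x, G x) ->
  [/\ G 0, (forall g t, G g -> 0 <= t -> G (t *: g)) & convex_cone G].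
Proof.
move=> cK [GK [cvG fG]] [x0 Gx0].
have Kx0 := GK _ Gx0.
have K0 : K 0 by have := cK x0 x0 0 0 Kx0 Kx0 (lexx _) (lexx _); rewrite !scale0r addr0.
have two0 : (2 : R) != 0 by rewrite pnatr_eq0.
have G0 : G 0.
  have K2 : K (2 *: x0) by apply: (cc_scale cK) => //; rewrite ler0n.
  have := fG 0 (2 *: x0) K0 K2.
  by rewrite add0r scalerA mulVf // scale1r => /(_ Gx0) [].
have sc1 : forall g t, G g -> 0 <= t -> t <= 1 -> G (t *: g).
  by move=> g t Gg t0 t1; have := cvG g 0 t Gg G0 t0 t1; rewrite scaler0 addr0.
have scK : forall k g t, G g -> 0 <= t -> t <= 2 ^+ k -> G (t *: g).
  elim=> [|k IH] g t Gg t0 tk; first by apply: sc1; rewrite // -(expr0 2).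
  have Kt : K (t *: g) by apply: (cc_scale cK) => //; apply: GK.
  have Ht2 : G ((2^-1 * t) *: g).
    apply: IH => //; first by rewrite mulr_ge0 // invr_ge0 ler0n.
    rewrite exprS in tk; rewrite ler_pdivrMl ?ltr0n //.
  have := fG _ _ Kt K0; rewrite addr0 scalerA => /(_ Ht2) [] //.
have sc : forall g t, G g -> 0 <= t -> G (t *: g).
  move=> g t Gg t0; apply: (scK (Num.bound t)) => //.
  exact/ltW/upper_nthrootP.
split => //.
move=> x y a b Gx Gy a0 b0.
have h : 1 - 2^-1 = (2^-1 : R) by field.
have := cvG (a *: x) (b *: y) (2^-1) (sc _ _ Gx a0) (sc _ _ Gy b0).
rewrite h invr_ge0 ler0n => /(_ isT).
have -> : (2^-1 : R) <= 1 by rewrite invf_le1 ?ltr0n // ler1n.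
move=> /(_ isT) /(sc _ 2) -/(_ (ler0n _ _)).
by rewrite scalerDr !scalerA mulrA mulfV // !mul1r.
Qed.

Lemma part2 (R : realType) (n : nat) (K Ft : 'rV[R]_n -> Prop) :
  convex_cone K -> is_face K Ft -> (exists x, Ft x) ->
  forall (d : nat) (F : nat -> ('rV[R]_n -> Prop)),
      F 0%N = K ->
      (forall i : nat, (i < d)%N -> facial_step Ft (F i) (F i.+1)) ->
      ~ (exists v, admissible Ft (F d) v) ->
      F d = Ft.
Proof.
move=> cK fc neG d F F0 Hst Hstop.
have [G0 Gsc cG] := face_facts cK fc neG.
have [GK [_ fG]] := fc.
have inv : forall i, (i <= d)%N ->
   [/\ (forall x, F i x -> K x), convex_cone (F i) & (forall x, Ft x -> F i x)].
  elim=> [_|i IH id]; first by rewrite F0; split => // x /GK.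
  have [FK cF GF] := IH (ltnW id).
  have [e [[_ [_ oe]] ->]] := Hst i id.
  split.
  - by move=> x [/FK].
  - move=> x y a b [Fx ex] [Fy ey] a0 b0; split; first exact: cF.
    by rewrite /hyp_perp dotvDr !dotvZr ex ey !mulr0 addr0.
  - by move=> x Gx; split; [apply: GF | apply: oe].
have [FK cF GF] := inv d (leqnn d).
apply: funext => x; apply: propext; split; last exact: GF.
move=> Fx; apply: contrapT => NGx; apply: Hstop.
pose C' := fun z => exists c g, F d c /\ Ft g /\ z = c - g.
have cC' : convex_cone C'.
  move=> z1 z2 a b [c1 [g1 [F1 [G1 ->]]]] [c2 [g2 [F2 [G2 ->]]]] a0 b0.
  exists (a *: c1 + b *: c2), (a *: g1 + b *: g2); split; first exact: cF.
  split; first exact: cG.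
  by rewrite !scalerBr opprD addrACA.
have ns : exists v, C' v /\ ~ C' (- v).
  exists x; split; first by exists x, 0; rewrite subr0.
  move=> [c [g [Fc [Gg e]]]].
  have e2 : x + c = g by rewrite addrC -[x]opprK e opprB addrC subrK.
  have Kx := FK _ Fx; have Kc := FK _ Fc.
  have Gh : Ft (2^-1 *: (x + c)) by rewrite e2; apply: Gsc => //; rewrite invr_ge0 ler0n.
  by have [] := fG _ _ Kx Kc Gh.
have HV : forall z, C' z -> forall j : 'I_n, (n <= j)%N -> z 0 j = 0.
  by move=> z _ j; rewrite leqNgt ltn_ord.
have [e [de [z [[c [g [Fc [Gg ->]]]] pz]]]] := Qlem (leqnn n) cC' HV ns.
have oe : orth Ft e.
  move=> y Gy; apply/eqP; rewrite eq_le; apply/andP; split.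
    have := de (0 - y) (ex_intro _ 0 (ex_intro _ y (conj (GF _ G0) (conj Gy erefl)))).
    by rewrite add0r dotvNr oppr_ge0.
  by have := de (y - 0) (ex_intro _ y (ex_intro _ 0 (conj (GF _ Gy) (conj G0 erefl)))); rewrite subr0.
exists e; split; [|split] => //.
- move=> y Fy.
  by have := de (y - 0) (ex_intro _ y (ex_intro _ 0 (conj Fy (conj G0 erefl)))); rewrite subr0.
- move=> oF; move: pz; rewrite dotvBr (oe g Gg) (oF c Fc) subr0 ltxx.
  done.
Qed.

Theorem mainTheorem1 (R : realType) (n : nat) (K Ft : 'rV[R]_n -> Prop) :
  convex_cone K -> is_face K Ft -> (exists x, Ft x) ->
  (* the process stops after finitely many steps: no infinite run *)
  (forall F : nat -> ('rV[R]_n -> Prop),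
      F 0%N = K -> exists i : nat, ~ facial_step Ft (F i) (F i.+1)) /\
  (* at termination, F_d = F_t *)
  (forall (d : nat) (F : nat -> ('rV[R]_n -> Prop)),
      F 0%N = K ->
      (forall i : nat, (i < d)%N -> facial_step Ft (F i) (F i.+1)) ->
      ~ (exists v, admissible Ft (F d) v) ->
      F d = Ft).
Proof.
move=> cK fc ne; split; first by move=> F _; apply: part1.
exact: part2.
Qed.
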